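(* Let $\{\chi^{(n)}_{n-j}\}_{1\le j\le n}$, $n\ge1$, be positive numbers, and let $\sigma_{\min}\in[0,2)$. Define $\mathsf a^{(n)}_0:=(2-\sigma_{\min})\chi^{(n)}_0$ and $\mathsf a^{(n)}_{n-j}:=\chi^{(n)}_{n-j}$ for $1\le j\le n-1$, and assume that for every $n\ge2$: (row decrease) $\mathsf a^{(n)}_{n-j-1}\ge\mathsf a^{(n)}_{n-j}>0$ for $1\le j\le n-1$; (column decrease) $\mathsf a^{(n-1)}_{n-1-j}\ge\mathsf a^{(n)}_{n-j}$ for $1\le j\le n-1$; (algebraic convexity) $\mathsf a^{(n-1)}_{n-2-j}-\mathsf a^{(n-1)}_{n-1-j}\ge\mathsf a^{(n)}_{n-1-j}-\mathsf a^{(n)}_{n-j}$ for $1\le j\le n-2$. For a real sequence $(w_k)_{k\ge1}$ and $n\ge1$ define $$Y_n:=\sum_{j=1}^{n-1}\big(\mathsf a^{(n)}_{n-j-1}-\mathsf a^{(n)}_{n-j}\big)\Big(\sum_{\ell=j+1}^n w_\ell\Big)^2+\mathsf a^{(n)}_{n-1}\Big(\sum_{\ell=1}^n w_\ell\Big)^2,\qquad Y_0:=0,$$ and for $n\ge2$ $$R_n:=\sum_{j=1}^{n-2}\big(\mathsf a^{(n-1)}_{n-2-j}-\mathsf a^{(n-1)}_{n-1-j}-\mathsf a^{(n)}_{n-j-1}+\mathsf a^{(n)}_{n-j}\big)\Big(\sum_{\ell=j+1}^{n-1}w_\ell\Big)^2+\big(\mathsf a^{(n-1)}_{n-2}-\mathsf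 a^{(n)}_{n-1}\big)\Big(\sum_{\ell=1}^{n-1}w_\ell\Big)^2,$$ $R_1:=0$. Then $Y_n\ge0$, $R_n\ge0$, $$2w_n\sum_{j=1}^n\chi^{(n)}_{n-j}w_j=Y_n-Y_{n-1}+\sigma_{\min}\chi^{(n)}_0w_n^2+R_n\qquad\text{for } n\ge1,$$ and consequently $$2\sum_{k=1}^n w_k\sum_{j=1}^k\chi^{(k)}_{k-j}w_j\ge Y_n+\sigma_{\min}\sum_{k=1}^n\chi^{(k)}_0w_k^2\qquad\text{for } n\ge1.$$ *)

(* Defs.v *)
From mathcomp Require Import all_boot all_order all_algebra.
Set Implicit Arguments. Unset Strict Implicit. Unset Printing Implicit Defensive.
Import Order.TTheory GRing.Theory Num.Theory.
Local Open Scope ring_scope.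

(* chi n k  stands for  chi^{(n)}_k  (meaningful for n >= 1, 0 <= k <= n-1). *)

Definition acoef (R : realFieldType) (sigma : R) (chi : nat -> nat -> R)
  (n k : nat) : R :=
  if k == 0%N then (2 - sigma) * chi n 0%N else chi n k.

Definition Yseq (R : realFieldType) (sigma : R) (chi : nat -> nat -> R)
  (w : nat -> R) (n : nat) : R :=
  if n == 0%N then 0 else
  \sum_(1 <= j < n)
     (acoef sigma chi n (n - j - 1) - acoef sigma chi n (n - j))
       * (\sum_(j.+1 <= l < n.+1) w l) ^+ 2
  + acoef sigma chi n (n - 1) * (\sum_(1 <= l < n.+1) w l) ^+ 2.

Definition Rseq (R : realFieldType) (sigma : R) (chi : nat -> nat -> R)
  (w : nat -> R) (n : nat) : R :=
  if (n <= 1)%N then 0 else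
  \sum_(1 <= j < n.-1)
     (acoef sigma chi n.-1 (n - 2 - j) - acoef sigma chi n.-1 (n - 1 - j)
      - acoef sigma chi n (n - j - 1) + acoef sigma chi n (n - j))
       * (\sum_(j.+1 <= l < n) w l) ^+ 2
  + (acoef sigma chi n.-1 (n - 2) - acoef sigma chi n (n - 1))
       * (\sum_(1 <= l < n) w l) ^+ 2.

(* Main.v *)
Require Import Defs.
From mathcomp Require Import all_boot all_order all_algebra.
From mathcomp Require Import zify ring lra.
Import Order.TTheory GRing.Theory Num.Theory.
Local Open Scope ring_scope.

Lemma abel (R : realFieldType) (b w : nat -> R) m :
  \sum_(1 <= j < m.+1) (b j.+1 - b j) * (\sum_(j.+1 <= l < m.+1) w l)
  + b 1%N * (\sum_(1 <= l < m.+1) w l) = \sum_(1 <= j < m.+1) b j * w j.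
Proof.
elim: m => [|m IH]; first by rewrite !big_geq // mulr0 addr0.
rewrite (big_nat_recr m.+1) //= [X in _ * X]big_geq // mulr0 addr0.
rewrite (eq_big_nat _ _ (F2 := fun j => (b j.+1 - b j) * (\sum_(j.+1 <= l < m.+1) w l) + (b j.+1 - b j) * w m.+1)); last first.
  by move=> j /andP[_ hj]; rewrite big_nat_recr // mulrDr.
rewrite big_split /= -mulr_suml telescope_sumr //.
have -> : \sum_(1 <= l < m.+2) w l = \sum_(1 <= l < m.+1) w l + w m.+1 by rewrite big_nat_recr.
have -> : \sum_(1 <= l < m.+2) b l * w l = \sum_(1 <= l < m.+1) b l * w l + b m.+1 * w m.+1 by rewrite big_nat_recr.
rewrite -IH.
ring.
Qed.

Lemma gstep (R : realFieldType) (b w : nat -> R) m :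
 (\sum_(1<=j<m.+1) (b j.+1 - b j) * (\sum_(j.+1<=l<m.+2) w l)^+2
    + b 1%N * (\sum_(1<=l<m.+2) w l)^+2)
 - (\sum_(1<=j<m.+1) (b j.+1 - b j) * (\sum_(j.+1<=l<m.+1) w l)^+2
    + b 1%N * (\sum_(1<=l<m.+1) w l)^+2)
 = 2 * w m.+1 * \sum_(1<=j<m.+1) b j * w j + b m.+1 * w m.+1 ^+ 2.
Proof.
rewrite (eq_big_nat _ _ (F2 := fun j => (b j.+1 - b j) * (\sum_(j.+1<=l<m.+1) w l)^+2
   + (2 * w m.+1) * ((b j.+1 - b j) * (\sum_(j.+1<=l<m.+1) w l)) + w m.+1 ^+ 2 * (b j.+1 - b j))); last first.
  by move=> j /andP[_ hj]; rewrite big_nat_recr //=; ring.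
rewrite !big_split /= -!mulr_sumr telescope_sumr //.
have -> : \sum_(1 <= l < m.+2) w l = \sum_(1 <= l < m.+1) w l + w m.+1 by rewrite big_nat_recr.
rewrite -(@abel R b w m).
ring.
Qed.

Lemma Yform (R : realFieldType) (sigma : R) chi w m :
  Yseq sigma chi w m.+1 =
  \sum_(1<=j<m.+1) (acoef sigma chi m.+1 (m.+1 - j.+1) - acoef sigma chi m.+1 (m.+1 - j))
      * (\sum_(j.+1<=l<m.+2) w l)^+2
  + acoef sigma chi m.+1 (m.+1 - 1) * (\sum_(1<=l<m.+2) w l)^+2.
Proof.
rewrite /Yseq /=; congr (_ + _); apply: eq_big_nat => j hj.
by have -> : (m.+1 - j - 1 = m.+1 - j.+1)%N by lia.
Qed.

Lemma YRform (R : realFieldType) (sigma : R) chi w m :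
  Yseq sigma chi w m - Rseq sigma chi w m.+1 =
  \sum_(1<=j<m.+1) (acoef sigma chi m.+1 (m.+1 - j.+1) - acoef sigma chi m.+1 (m.+1 - j))
      * (\sum_(j.+1<=l<m.+1) w l)^+2
  + acoef sigma chi m.+1 (m.+1 - 1) * (\sum_(1<=l<m.+1) w l)^+2.
Proof.
case: m => [|k].
  by rewrite /Yseq /Rseq /= !big_geq // expr0n /= mulr0 addr0 subr0.
rewrite (big_nat_recr k.+1) //= [X in _ * X ^+ 2]big_geq // expr0n /= mulr0 addr0.
rewrite /Yseq /Rseq /=.
set A1 := \sum_(1 <= j < k.+1) _.
set A2 := \sum_(1 <= j < k.+1) _.
set A3 := \sum_(1 <= j < k.+1) _.
have hA : A1 - A2 = A3.
  rewrite /A1 /A2 /A3 -sumrB; apply: eq_big_nat => j hj.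
  have -> : (k.+2 - 2 - j = k.+1 - j - 1)%N by lia.
  have -> : (k.+2 - 1 - j = k.+1 - j)%N by lia.
  have -> : (k.+2 - j - 1 = k.+2 - j.+1)%N by lia.
  ring.
have -> : (k.+2 - 2 = k.+1 - 1)%N by lia.
rewrite -hA; ring.
Qed.

Lemma ident (R : realFieldType) (sigma : R) chi w n : (1 <= n)%N ->
  2 * w n * (\sum_(1 <= j < n.+1) chi n (n - j)%N * w j)
  = Yseq sigma chi w n - Yseq sigma chi w n.-1
    + sigma * chi n 0%N * w n ^+ 2 + Rseq sigma chi w n.
Proof.
case: n => [//|m] _ /=.
have key := @gstep R (fun j => acoef sigma chi m.+1 (m.+1 - j)) w m.
rewrite -Yform -YRform subnn /= in key.
have -> : Yseq sigma chi w m.+1 - Yseq sigma chi w m + sigma * chi m.+1 0%N * w m.+1 ^+ 2 +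
  Rseq sigma chi w m.+1 = (Yseq sigma chi w m.+1 - (Yseq sigma chi w m - Rseq sigma chi w m.+1))
   + sigma * chi m.+1 0%N * w m.+1 ^+ 2 by ring.
rewrite key big_nat_recr //= subnn.
have -> : \sum_(1 <= j < m.+1) acoef sigma chi m.+1 (m.+1 - j) * w j
   = \sum_(1 <= j < m.+1) chi m.+1 (m.+1 - j)%N * w j.
  apply: eq_big_nat => j /andP[_ hj].
  rewrite /acoef; have -> : (m.+1 - j == 0)%N = false by apply/negbTE; lia.
  by [].
rewrite /acoef /=; ring.
Qed.

Lemma telesc (R : realFieldType) (sigma : R) chi w n :
  2 * (\sum_(1 <= k < n.+1) w k * (\sum_(1 <= j < k.+1) chi k (k - j)%N * w j))
  = Yseq sigma chi w n + sigma * (\sum_(1 <= k < n.+1) chi k 0%N * w k ^+ 2)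
    + \sum_(1 <= k < n.+1) Rseq sigma chi w k.
Proof.
elim: n => [|n IH].
  by rewrite !big_geq // /Yseq /=; ring.
rewrite !(big_nat_recr n.+1) //= mulrDr IH.
have E := (@ident R sigma chi w n.+1 isT); rewrite big_nat_recr //= in E.
rewrite [2 * (w n.+1 * _)]mulrA E.
ring.
Qed.

Theorem lemma2p3 (R : realFieldType) (chi : nat -> nat -> R) (sigma : R)
  (w : nat -> R)
  (chi_pos : forall n j, (1 <= j <= n)%N -> 0 < chi n (n - j)%N)
  (sigma_ge0 : 0 <= sigma) (sigma_lt2 : sigma < 2)
  (row_dec : forall n j, (2 <= n)%N -> (1 <= j <= n - 1)%N ->
     acoef sigma chi n (n - j - 1)%N >= acoef sigma chi n (n - j)%N /\
     acoef sigma chi n (n - j)%N > 0)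
  (col_dec : forall n j, (2 <= n)%N -> (1 <= j <= n - 1)%N ->
     acoef sigma chi (n - 1)%N (n - 1 - j)%N >= acoef sigma chi n (n - j)%N)
  (alg_conv : forall n j, (2 <= n)%N -> (1 <= j <= n - 2)%N ->
     acoef sigma chi (n - 1)%N (n - 2 - j)%N - acoef sigma chi (n - 1)%N (n - 1 - j)%N
     >= acoef sigma chi n (n - 1 - j)%N - acoef sigma chi n (n - j)%N) :
  forall n : nat, (1 <= n)%N ->
    [/\ 0 <= Yseq sigma chi w n,
        0 <= Rseq sigma chi w n,
        2 * w n * (\sum_(1 <= j < n.+1) chi n (n - j)%N * w j)
          = Yseq sigma chi w n - Yseq sigma chi w n.-1
            + sigma * chi n 0%N * w n ^+ 2 + Rseq sigma chi w n
      & 2 * (\sum_(1 <= k < n.+1) w k * (\sum_(1 <= j < k.+1) chi k (k - j)%N * w j))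
          >= Yseq sigma chi w n + sigma * (\sum_(1 <= k < n.+1) chi k 0%N * w k ^+ 2)].
Proof.
have Yge0 : forall n, 0 <= Yseq sigma chi w n.
  case=> [|[|k]]; first by rewrite /Yseq.
    rewrite /Yseq /= big_geq // add0r; apply: mulr_ge0; last exact: sqr_ge0.
    rewrite /acoef /=; apply: mulr_ge0; first by rewrite subr_ge0 ltW.
    by apply: ltW; have := chi_pos 1%N 1%N isT.
  rewrite /Yseq /=; apply: addr_ge0.
    rewrite big_nat_cond; apply: sumr_ge0 => j /andP[/andP[h1 h2] _].
    apply: mulr_ge0; last exact: sqr_ge0.
    have [H _] := row_dec k.+2 j isT ltac:(lia).
    by rewrite subr_ge0.
  apply: mulr_ge0; last exact: sqr_ge0.
  have [_ H] := row_dec k.+2 1%N isT ltac:(lia).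
  exact: ltW.
have Rge0 : forall n, 0 <= Rseq sigma chi w n.
  case=> [|[|k]]; try by rewrite /Rseq.
  rewrite /Rseq /=; apply: addr_ge0.
    rewrite big_nat_cond; apply: sumr_ge0 => j /andP[/andP[h1 h2] _].
    apply: mulr_ge0; last exact: sqr_ge0.
    have H := alg_conv k.+2 j isT ltac:(lia).
    have e1 : (k.+2 - 1 - j = k.+1 - j)%N by lia.
    have e2 : (k.+2 - j - 1 = k.+1 - j)%N by lia.
    have e3 : (k.+2 - 2 - j = k - j)%N by lia.
    have e4 : (k.+2 - 1 = k.+1)%N by lia.
    rewrite ?e1 ?e2 ?e3 ?e4 in H *.
    lra.
  apply: mulr_ge0; last exact: sqr_ge0.
  have H := col_dec k.+2 1%N isT ltac:(lia).
  have e1 : (k.+2 - 1 = k.+1)%N by lia.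
  have e2 : (k.+2 - 1 - 1 = k.+2 - 2)%N by lia.
  rewrite e2 e1 in H.
  by rewrite subr_ge0.
move=> n hn; split => //.
  exact: ident.
rewrite (@telesc R sigma) lerDl.
by apply: sumr_ge0 => k _.
Qed.
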